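(* Let $N\ge1$ and let $a_0,\dots,a_N$, $b_0,\dots,b_N$, $c_0,\dots,c_N$ be real numbers such that the $a_i$ are pairwise distinct, the $b_j$ are pairwise distinct, and the $c_k$ are pairwise distinct. Then the $\binom{N+3}{3}$ operators $$(a_i\mathbb{I}+b_j\sigma_X+c_k\sigma_Y+\sigma_Z)^{\otimes N},\qquad i,j,k\in\mathbb{Z}_{\ge0},\ i+j+k\le N,$$ are linearly independent over $\mathbb{R}$ and form a basis of the real vector space $\mathrm{Sym}_N(G_1)$ of permutation-invariant Hermitian operators on $N$ qubits.
   Context: $\mathbb{I},\sigma_X,\sigma_Y,\sigma_Z$ denote the $2\times2$ identity and Pauli matrices. For $\pi\in S_N$, $P(\pi)$ is the unitary on $(\mathbb{C}^2)^{\otimes N}$ permuting the tensor factors according to $\pi$. $\mathrm{Sym}_N(G_1)$ is the real vector space of Hermitian operators $M$ on $(\mathbb{C}^2)^{\otimes N}$ with $P(\pi)MP(\pi)^\dagger=M$ for all $\pi\in S_N$; it has real dimension $\binom{N+3}{3}$. *)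

(* Defs.v *)
From HB Require Import structures.
From mathcomp Require Import all_boot all_order all_algebra all_fingroup.
Set Implicit Arguments. Unset Strict Implicit. Unset Printing Implicit Defensive.
Import Order.TTheory GRing.Theory Num.Theory.
Local Open Scope ring_scope.

(* Computational basis of N qubits: bit strings x : 'I_N -> 'I_2. *)
Definition qbits (N : nat) : finType := {ffun 'I_N -> 'I_2}.
Definition qdim (N : nat) : nat := #|{: qbits N}|.
Definition qidx (N : nat) (i : 'I_(qdim N)) : qbits N := enum_val i.

Section Ops.
Variable C : numClosedFieldType.

Definition matI : 'M[C]_2 := 1%:M.
Definition sigmaX : 'M[C]_2 :=
  \matrix_(r < 2, c < 2) (if r == c then 0 else 1).
Definition sigmaY : 'M[C]_2 :=
  \matrix_(r < 2, c < 2)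
    (if r == c then 0 else if (r == 0 :> nat) then - 'i else 'i).
Definition sigmaZ : 'M[C]_2 :=
  \matrix_(r < 2, c < 2) (if r == c then (if (r == 0 :> nat) then 1 else -1) else 0).

Definition adj_mx (n : nat) (M : 'M[C]_n) : 'M[C]_n := map_mx Num.conj (M^T).

Definition tpow (N : nat) (A : 'M[C]_2) : 'M[C]_(qdim N) :=
  \matrix_(i, j) \prod_(l < N) A (qidx i l) (qidx j l).

(* P(pi): permutes the tensor factors, |x_1..x_N> |-> |x_{pi^-1 1} .. x_{pi^-1 N}>. *)
Definition Pperm (N : nat) (pi : {perm 'I_N}) : 'M[C]_(qdim N) :=
  \matrix_(i, j)
    (qidx i == [ffun l => qidx j ((pi^-1)%g l)])%:R.

Definition hermitian (n : nat) (M : 'M[C]_n) : Prop := adj_mx M = M.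

Definition SymN (N : nat) (M : 'M[C]_(qdim N)) : Prop :=
  hermitian M /\
  forall pi : {perm 'I_N}, Pperm pi *m M *m adj_mx (Pperm pi) = M.

Definition Top (N : nat) (a b c : C) : 'M[C]_(qdim N) :=
  tpow N (a *: matI + b *: sigmaX + c *: sigmaY + sigmaZ).
End Ops.

(* Main.v *)
From Pilot Require Import Defs.
From HB Require Import structures.
From mathcomp Require Import all_boot all_order all_algebra all_fingroup.
From mathcomp Require Import ring zify.
Set Implicit Arguments. Unset Strict Implicit. Unset Printing Implicit Defensive.
Import Order.TTheory GRing.Theory Num.Theory.
Local Open Scope ring_scope.

Section Main.
Variable C : numClosedFieldType.

Definition Am (x y z : C) : 'M[C]_2 := x *: matI C + y *: sigmaX C + z *: sigmaY C + sigmaZ C.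

Definition o0 : 'I_2 := ord0.
Definition o1 : 'I_2 := ord_max.

Lemma I2_cases (r : 'I_2) : r = o0 \/ r = o1.
Proof. case: r => [[|[|//]]] H; [left|right]; exact: val_inj. Qed.

Lemma Am00 x y z : Am x y z o0 o0 = x + 1.
Proof. rewrite !mxE /=; ring. Qed.
Lemma Am11 x y z : Am x y z o1 o1 = x - 1.
Proof. rewrite !mxE /=; ring. Qed.
Lemma Am01 x y z : Am x y z o0 o1 = y - z * 'i.
Proof. rewrite !mxE /=; ring. Qed.
Lemma Am10 x y z : Am x y z o1 o0 = y + z * 'i.
Proof. rewrite !mxE /=; ring. Qed.

Lemma sum_I2 (F : 'I_2 -> C) : \sum_r F r = F o0 + F o1.
Proof.
rewrite big_ord_recl big_ord_recl big_ord0 addr0; congr (_ + F _); exact: val_inj.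
Qed.

Definition linf (L A : 'M[C]_2) : C := \sum_r \sum_s L r s * A r s.

Definition Lf (al be ga de : C) : 'M[C]_2 :=
  \matrix_(r, s) (if r == s then (if r == o0 then (al + de) / 2 else (al - de) / 2)
                  else if r == o0 then (be + ga * 'i) / 2 else (be - ga * 'i) / 2).

Lemma linLf al be ga de x y z :
  linf (Lf al be ga de) (Am x y z) = al * x + be * y + ga * z + de.
Proof.
rewrite /linf !sum_I2. rewrite Am00 Am11 Am01 Am10 !mxE /=.
have h2 : (2 : C) != 0 by rewrite pnatr_eq0.
have hi : 'i * 'i = -1 :> C by rewrite -expr2 sqrCi.
transitivity (al * x + de + be * y - ga * z * ('i * 'i)).
  by field.
by rewrite hi; ring.
Qed.

Variable N : nat.
Definition Tf (A : 'M[C]_2) (x y : qbits N) : C := \prod_(l < N) A (x l) (y l).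

Lemma tpowE A x y : tpow N A (enum_rank x) (enum_rank y) = Tf A x y.
Proof. by rewrite mxE /qidx !enum_rankK. Qed.

Lemma linf_pair L A : linf L A = \sum_(v : 'I_2 * 'I_2) L v.1 v.2 * A v.1 v.2.
Proof. by rewrite /linf pair_bigA. Qed.

Lemma prod_lin (s : seq 'M[C]_2) (A : 'M[C]_2) : size s = N ->
  \prod_(L <- s) linf L A =
  \sum_(f : {ffun 'I_N -> 'I_2 * 'I_2})
     (\prod_(l < N) (nth 0 s l) (f l).1 (f l).2) *
     Tf A [ffun l => (f l).1] [ffun l => (f l).2].
Proof.
move=> hs; rewrite (big_nth 0) hs big_mkord.
under eq_bigr do rewrite linf_pair.
rewrite bigA_distr_bigA; apply: eq_bigr => f _.
rewrite -big_split /=; apply: eq_bigr => l _; by rewrite !ffunE.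
Qed.

Definition K := 'I_N.+1.
Definition K3 := (K * (K * K))%type.
Definition good (p : K3) := (p.1 + p.2.1 + p.2.2 <= N)%N.

Lemma tsum (F : K -> K -> K -> C) :
  \sum_(i < N.+1) \sum_(j < N.+1) \sum_(k < N.+1 | (i + j + k <= N)%N) F i j k =
  \sum_(p : K3 | good p) F p.1 p.2.1 p.2.2.
Proof.
under eq_bigr => i _ do rewrite (pair_big_dep xpredT (fun (j k : K) => (i + j + k <= N)%N)).
by rewrite (pair_big_dep xpredT).
Qed.

Variables (a b c : K -> C).
Hypotheses (ia : injective a) (ib : injective b) (ic : injective c).

Definition At (p : K3) := Am (a p.1) (b p.2.1) (c p.2.2).

Lemma step1 (lam : K3 -> C) :
  (forall x y : qbits N, \sum_(p | good p) lam p * Tf (At p) x y = 0) ->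
  forall s, size s = N -> \sum_(p | good p) lam p * \prod_(L <- s) linf L (At p) = 0.
Proof.
move=> H s hs.
under eq_bigr => p _ do rewrite (prod_lin _ hs) mulr_sumr.
rewrite exchange_big /= big1 // => f _.
under eq_bigr => p _ do rewrite mulrCA.
by rewrite -mulr_sumr H mulr0.
Qed.

Definition sq (q : K3) : seq 'M[C]_2 :=
  [seq Lf 1 0 0 (- a (inord i)) | i <- iota 0 q.1] ++
  [seq Lf 0 1 0 (- b (inord j)) | j <- iota 0 q.2.1] ++
  [seq Lf 0 0 1 (- c (inord k)) | k <- iota 0 q.2.2] ++
  nseq (N - (q.1 + q.2.1 + q.2.2)) (Lf 0 0 0 1).

Lemma size_sq q : good q -> size (sq q) = N.
Proof.
rewrite /good => h; rewrite /sq !size_cat !size_map !size_iota size_nseq.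
by rewrite !addnA subnKC.
Qed.

Definition G (q p : K3) : C :=
  (\prod_(i <- iota 0 q.1) (a p.1 - a (inord i))) *
  (\prod_(j <- iota 0 q.2.1) (b p.2.1 - b (inord j))) *
  (\prod_(k <- iota 0 q.2.2) (c p.2.2 - c (inord k))).

Lemma prod_sq q p : \prod_(L <- sq q) linf L (At p) = G q p.
Proof.
rewrite /sq !big_cat !big_map /G /At.
rewrite [\big[_/_]_(i <- nseq _ _) _]big1_seq; last first.
  by move=> L /andP[_]; rewrite mem_nseq => /andP[_ /eqP ->]; rewrite linLf; ring.
rewrite /= mulr1 !mulrA; congr (_ * _ * _); apply: eq_bigr => i _; rewrite linLf; ring.
Qed.

Lemma G0 (q p : K3) : ~~ [&& (q.1 <= p.1)%N, (q.2.1 <= p.2.1)%N & (q.2.2 <= p.2.2)%N] -> G q p = 0.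
Proof.
rewrite !negb_and -!ltnNge => /orP[h|/orP[h|h]]; rewrite /G.
- by rewrite (big_rem (val p.1)) ?mem_iota //= inord_val subrr !mul0r.
- by rewrite [X in _ * X * _](big_rem (val p.2.1)) ?mem_iota //= inord_val subrr mul0r mulr0 mul0r.
- by rewrite [X in _ * X](big_rem (val p.2.2)) ?mem_iota //= inord_val subrr mul0r mulr0.
Qed.

Lemma Gqq (q : K3) : G q q != 0.
Proof.
rewrite /G !mulf_neq0 // prodf_seq_neq0; apply/allP => i; rewrite mem_iota add0n => /andP[_ hi];
  rewrite subr_eq0; apply/eqP.
- move/ia/(congr1 (@nat_of_ord _)); rewrite inordK /=; first by move=> e; rewrite e ltnn in hi.
  exact: ltn_trans hi (ltn_ord _).
- move/ib/(congr1 (@nat_of_ord _)); rewrite inordK /=; first by move=> e; rewrite e ltnn in hi.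
  exact: ltn_trans hi (ltn_ord _).
- move/ic/(congr1 (@nat_of_ord _)); rewrite inordK /=; first by move=> e; rewrite e ltnn in hi.
  exact: ltn_trans hi (ltn_ord _).
Qed.

Lemma indep (lam : K3 -> C) :
  (forall x y : qbits N, \sum_(p | good p) lam p * Tf (At p) x y = 0) ->
  forall p, good p -> lam p = 0.
Proof.
move=> H.
have S q : good q -> \sum_(p | good p) lam p * G q p = 0.
  move=> gq; rewrite -[RHS](step1 H (size_sq gq)); apply: eq_bigr => p _; by rewrite prod_sq.
suff: forall d q, good q -> (N - (q.1 + q.2.1 + q.2.2) <= d)%N -> lam q = 0.
  by move=> h q gq; apply: (h _ q gq (leqnn _)).
elim=> [|d IH] q gq hd.
- move: (S q gq); rewrite (bigD1 q) //= big1 ?addr0.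
    by move/eqP; rewrite mulf_eq0 (negbTE (Gqq q)) orbF => /eqP.
  move=> p /andP[gp npq].
  case le: [&& (q.1 <= p.1)%N, (q.2.1 <= p.2.1)%N & (q.2.2 <= p.2.2)%N]; last by rewrite G0 ?le ?mulr0.
  exfalso; move: le gp gq hd npq; rewrite /good.
  case: p => [p1 [p2 p3]]; case: q => [q1 [q2 q3]] /= /and3P[h1 h2 h3] gp gq hd npq.
  have e1 : p1 = q1 by apply: ord_inj; lia.
  have e2 : p2 = q2 by apply: ord_inj; lia.
  have e3 : p3 = q3 by apply: ord_inj; lia.
  by rewrite e1 e2 e3 eqxx in npq.
- move: (S q gq); rewrite (bigD1 q) //= big1 ?addr0.
    by move/eqP; rewrite mulf_eq0 (negbTE (Gqq q)) orbF => /eqP.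
  move=> p /andP[gp npq].
  case le: [&& (q.1 <= p.1)%N, (q.2.1 <= p.2.1)%N & (q.2.2 <= p.2.2)%N]; last by rewrite G0 ?le ?mulr0.
  rewrite (IH p gp) ?mul0r //.
  move: le gp gq hd npq; rewrite /good.
  case: p => [p1 [p2 p3]]; case: q => [q1 [q2 q3]] /= /and3P[h1 h2 h3] gp gq hd npq.
  have : (p1 + p2 + p3 > q1 + q2 + q3)%N.
    case: (ltngtP (q1 + q2 + q3) (p1 + p2 + p3)) => // e.
      by lia.
    have e1 : p1 = q1 by apply: ord_inj; lia.
    have e2 : p2 = q2 by apply: ord_inj; lia.
    have e3 : p3 = q3 by apply: ord_inj; lia.
    by rewrite e1 e2 e3 eqxx in npq.
  lia.
Qed.

Definition pcomp (x : qbits N) (pi : {perm 'I_N}) : qbits N := [ffun l => x (pi l)].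

Lemma sum_delta n (F : 'I_n -> C) j0 : \sum_j (j == j0)%:R * F j = F j0.
Proof.
rewrite (bigD1 j0) //= eqxx mul1r big1 ?addr0 // => j /negbTE ->; by rewrite mul0r.
Qed.
Lemma sum_delta' n (F : 'I_n -> C) j0 : \sum_j F j * (j == j0)%:R = F j0.
Proof. by rewrite -(sum_delta F); apply: eq_bigr => j _; rewrite mulrC. Qed.

Lemma Pidx (pi : {perm 'I_N}) (i j : 'I_(qdim N)) :
  (qidx i == [ffun l => qidx j ((pi^-1)%g l)]) = (j == enum_rank (pcomp (qidx i) pi)).
Proof.
apply/eqP/eqP => [e | ->].
  apply: enum_val_inj; rewrite enum_rankK; apply/ffunP => l.
  by rewrite /pcomp e !ffunE permK.
apply/ffunP => l; rewrite !ffunE /qidx enum_rankK /pcomp ffunE permKV //.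
Qed.

Lemma Pconj (M : 'M[C]_(qdim N)) (pi : {perm 'I_N}) i j :
  (Pperm C pi *m M *m adj_mx (Pperm C pi)) i j =
  M (enum_rank (pcomp (qidx i) pi)) (enum_rank (pcomp (qidx j) pi)).
Proof.
rewrite mxE.
under eq_bigr => m _ do rewrite !mxE Pidx rmorph_nat.
rewrite sum_delta'.
under eq_bigr => m _ do rewrite mxE Pidx.
by rewrite sum_delta.
Qed.

Lemma Tf_perm A x y (pi : {perm 'I_N}) : Tf A (pcomp x pi) (pcomp y pi) = Tf A x y.
Proof.
rewrite /Tf [RHS](reindex_inj (@perm_inj _ pi)) /=; apply: eq_bigr => l _; by rewrite !ffunE.
Qed.

Lemma tpow_perm A (pi : {perm 'I_N}) : Pperm C pi *m tpow N A *m adj_mx (Pperm C pi) = tpow N A.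
Proof.
apply/matrixP => i j; rewrite Pconj !tpowE -[i]enum_valK -[j]enum_valK tpowE.
by rewrite /qidx !enum_rankK Tf_perm.
Qed.

Lemma tpow_herm (A : 'M[C]_2) : (forall r s, Num.conj (A s r) = A r s) -> Pilot.Defs.hermitian (tpow N A).
Proof.
move=> hA; apply/matrixP => i j; rewrite !mxE (rmorph_prod (@Num.conj C)); apply: eq_bigr => l _; exact: hA.
Qed.

Lemma Am_herm x y z : x \is Num.real -> y \is Num.real -> z \is Num.real ->
  forall r s, Num.conj (Am x y z s r) = Am x y z r s.
Proof.
move=> hx hy hz r s.
have cx : Num.conj x = x := conj_Creal hx.
have cy : Num.conj y = y := conj_Creal hy.
have cz : Num.conj z = z := conj_Creal hz.
have ci : Num.conj 'i = - 'i :> C := conjCi _.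
case: (I2_cases r) => ->; case: (I2_cases s) => ->;
 rewrite ?Am00 ?Am11 ?Am01 ?Am10 ?rmorphD ?rmorphB ?rmorph1 ?rmorphN ?rmorphM /=
   ?cx ?cy ?cz ?ci //; ring.
Qed.

Definition zt (x y : qbits N) : N.-tuple ('I_2 * 'I_2) := [tuple (x l, y l) | l < N].
Definition cnt v x y := count_mem v (zt x y).
Definition tau x y : K3 :=
  (inord (cnt (o0, o0) x y), (inord (cnt (o0, o1) x y), inord (cnt (o1, o0) x y))).

Lemma count4 (s : seq ('I_2 * 'I_2)) :
  (count_mem (o0, o0) s + count_mem (o0, o1) s + count_mem (o1, o0) s + count_mem (o1, o1) s
   = size s)%N.
Proof.
elim: s => [//|[r t] s IH] /=.
case: (I2_cases r) => ->; case: (I2_cases t) => -> /=; rewrite ?eqxx /=. all: by rewrite !add0n ?add1n -IH ?addSn ?addnS.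
Qed.

Lemma cnt_le v x y : (cnt v x y <= N)%N.
Proof. by rewrite /cnt -{2}(size_tuple (zt x y)) count_size. Qed.

Lemma good_tau x y : good (tau x y).
Proof.
rewrite /good /tau /= !inordK ?ltnS ?cnt_le //.
have := count4 (zt x y); rewrite size_tuple /cnt; lia.
Qed.

Lemma tauE x y x' y' : tau x y = tau x' y' ->
  exists pi : {perm 'I_N}, x' = pcomp x pi /\ y' = pcomp y pi.
Proof.
rewrite /tau => [[]] /(congr1 val) e1 /(congr1 val) e2 /(congr1 val) e3.
move: e1 e2 e3; rewrite /= !inordK ?ltnS ?cnt_le // => e1 e2 e3.
have e4 : cnt (o1, o1) x y = cnt (o1, o1) x' y'.
  have := count4 (zt x y); have := count4 (zt x' y'); rewrite !size_tuple /cnt in e1 e2 e3 *; lia.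
have hp : perm_eq (zt x' y') (zt x y).
  apply/allP => v _; apply/eqP; rewrite /= -/(cnt v x' y') -/(cnt v x y).
  by case: v => r t; case: (I2_cases r) => ->; case: (I2_cases t) => ->.
case/tuple_permP: hp => p e.
have et : zt x' y' = [tuple tnth (zt x y) (p i) | i < N] by apply: val_inj.
exists p; split; apply/ffunP => l; have := congr1 (fun t => tnth t l) et;
  rewrite /zt !tnth_mktuple ffunE => [[]] //.
Qed.

Definition rep (t : K3) := [pick xy : qbits N * qbits N | tau xy.1 xy.2 == t].

Lemma rep_tau x y : exists xy, rep (tau x y) = Some xy /\ tau xy.1 xy.2 = tau x y.
Proof.
rewrite /rep; case: pickP => [xy /eqP e | /(_ (x, y))]; first by exists xy.
by rewrite /= eqxx.
Qed.

Lemma Tf_tau A x y x' y' : tau x y = tau x' y' -> Tf A x' y' = Tf A x y.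
Proof. by case/tauE => pi [-> ->]; rewrite Tf_perm. Qed.

Definition Vf (p t : K3) : C :=
  if good t then (if good p then
     (if rep t is Some xy then Tf (At p) xy.1 xy.2 else 0) else 0)
  else (p == t)%:R.

Definition nK := #|{: K3}|.
Definition V : 'M[C]_nK := \matrix_(r, s) Vf (enum_val r) (enum_val s).

Lemma sumK (F : 'I_nK -> C) : \sum_r F r = \sum_(p : K3) F (enum_rank p).
Proof. by rewrite (reindex (@enum_rank K3)) //; apply: onW_bij; exact: enum_rank_bij. Qed.

Lemma vV (v : 'rV[C]_nK) t :
  (v *m V) 0 (enum_rank t) = \sum_(p : K3) v 0 (enum_rank p) * Vf p t.
Proof. by rewrite mxE sumK; apply: eq_bigr => p _; rewrite mxE !enum_rankK. Qed.

Lemma vV_good (v : 'rV[C]_nK) x y :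
  exists xy, rep (tau x y) = Some xy /\ tau xy.1 xy.2 = tau x y /\
  (v *m V) 0 (enum_rank (tau x y)) =
    \sum_(p | good p) v 0 (enum_rank p) * Tf (At p) x y.
Proof.
have [xy [e1 e2]] := rep_tau x y; exists xy; do 2!split => //.
rewrite vV (big_mkcond good); apply: eq_bigr => p _.
rewrite /Vf good_tau e1; case: (good p); last by rewrite mulr0.
by rewrite (Tf_tau _ e2).
Qed.

Lemma V_unit : V \in unitmx.
Proof.
rewrite unitmxE unitfE; apply/negP => /det0P [v vn0 vV0]; case/negP: vn0.
set lam := fun p => v 0 (enum_rank p).
have hng t : ~~ good t -> lam t = 0.
  move=> nt; have := congr1 (fun m : 'rV[C]_nK => m 0 (enum_rank t)) vV0; rewrite vV mxE.
  rewrite (bigD1 t) //= big1 ?addr0 /Vf ?(negbTE nt) ?eqxx ?mulr1 //.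
  by move=> p /negbTE ->; rewrite mulr0.
have hg : forall p, good p -> lam p = 0.
  apply: indep => x y.
  have [xy [_ [_ e]]] := vV_good v x y; by rewrite -e vV0 mxE.
apply/eqP/rowP => r; rewrite mxE -[r]enum_valK.
by case g: (good (enum_val r)); [apply: hg | apply: hng; rewrite g].
Qed.

Hypotheses (ha : forall i, a i \is Num.real) (hb : forall j, b j \is Num.real)
  (hc : forall k, c k \is Num.real).

Lemma Tf_conj p x y : Num.conj (Tf (At p) y x) = Tf (At p) x y.
Proof.
rewrite /Tf (rmorph_prod (@Num.conj C)); apply: eq_bigr => l _; exact: Am_herm.
Qed.

Lemma span (M : 'M[C]_(qdim N)) : SymN M ->
  exists lam0 : K3 -> C, (forall p, good p -> lam0 p \is Num.real) /\
   forall x y, M (enum_rank x) (enum_rank y) = \sum_(p | good p) lam0 p * Tf (At p) x y.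
Proof.
case=> hM hP.
have Minv x y pi : M (enum_rank x) (enum_rank y) =
    M (enum_rank (pcomp x pi)) (enum_rank (pcomp y pi)).
  by have := congr1 (fun m : 'M[C]_(qdim N) => m (enum_rank x) (enum_rank y)) (hP pi);
    rewrite Pconj /qidx !enum_rankK => <-.
have Mtau x y x' y' : tau x y = tau x' y' ->
    M (enum_rank x') (enum_rank y') = M (enum_rank x) (enum_rank y).
  by case/tauE => pi [-> ->]; rewrite -Minv.
pose w : 'rV[C]_nK := \row_s (if good (enum_val s) then
   (if rep (enum_val s) is Some xy then M (enum_rank xy.1) (enum_rank xy.2) else 0) else 0).
pose v := w *m invmx V.
have vVw : v *m V = w by rewrite mulmxKV ?V_unit.
pose lam0 p := v 0 (enum_rank p).
have hsum x y : M (enum_rank x) (enum_rank y) = \sum_(p | good p) lam0 p * Tf (At p) x y.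
  have [xy [e1 [e2 e3]]] := vV_good v x y.
  by rewrite -e3 vVw mxE enum_rankK good_tau e1 (Mtau _ _ _ _ e2).
exists lam0; split => //.
have hz : forall x y, \sum_(p | good p) (lam0 p - Num.conj (lam0 p)) * Tf (At p) x y = 0.
  move=> x y.
  have hh : M (enum_rank x) (enum_rank y) = Num.conj (M (enum_rank y) (enum_rank x)).
    by rewrite -{1}hM !mxE.
  under eq_bigr do rewrite mulrBl.
  rewrite sumrB -hsum hh hsum rmorph_sum /=.
  rewrite [X in _ - X](eq_bigr (fun p => Num.conj (lam0 p * Tf (At p) y x))) ?subrr //.
  by move=> p _; rewrite rmorphM /= Tf_conj.
move=> p gp; have := indep hz gp; move/eqP; rewrite subr_eq0 CrealE eq_sym //.
Qed.

Lemma entry_sum (lam : K -> K -> K -> C) x y :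
  (\sum_(i < N.+1) \sum_(j < N.+1) \sum_(k < N.+1 | (i + j + k <= N)%N)
     lam i j k *: Top N (a i) (b j) (c k)) (enum_rank x) (enum_rank y) =
  \sum_(p | good p) lam p.1 p.2.1 p.2.2 * Tf (At p) x y.
Proof.
rewrite summxE.
under eq_bigr => i _ do rewrite summxE.
under eq_bigr => i _ do under eq_bigr => j _ do rewrite summxE.
under eq_bigr => i _ do under eq_bigr => j _ do under eq_bigr => k _ do rewrite mxE tpowE.
by rewrite tsum.
Qed.
End Main.

Theorem mainTheorem3 (C : numClosedFieldType) (N : nat) (HN : (1 <= N)%N)
  (a b c : 'I_N.+1 -> C)
  (ha : forall i, a i \is Num.real) (hb : forall j, b j \is Num.real)
  (hc : forall k, c k \is Num.real)
  (ia : injective a) (ib : injective b) (ic : injective c) :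
  (* each operator lies in Sym_N(G_1) *)
  (forall i j k : 'I_N.+1, (i + j + k <= N)%N -> SymN (Top N (a i) (b j) (c k)))
  /\
  (* linear independence over R *)
  (forall lam : 'I_N.+1 -> 'I_N.+1 -> 'I_N.+1 -> C,
     (forall i j k, lam i j k \is Num.real) ->
     \sum_(i < N.+1) \sum_(j < N.+1) \sum_(k < N.+1 | (i + j + k <= N)%N)
        lam i j k *: Top N (a i) (b j) (c k) = 0 ->
     forall i j k : 'I_N.+1, (i + j + k <= N)%N -> lam i j k = 0)
  /\
  (* they span Sym_N(G_1) over R *)
  (forall M : 'M[C]_(qdim N), SymN M ->
     exists lam : 'I_N.+1 -> 'I_N.+1 -> 'I_N.+1 -> C,
       (forall i j k, lam i j k \is Num.real) /\
       M = \sum_(i < N.+1) \sum_(j < N.+1) \sum_(k < N.+1 | (i + j + k <= N)%N)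
             lam i j k *: Top N (a i) (b j) (c k)).
Proof.
split; [|split].
- move=> i j k _; split.
  + exact: (tpow_herm N (Am_herm (ha i) (hb j) (hc k))).
  + by move=> pi; exact: (tpow_perm (Am (a i) (b j) (c k))).
- move=> lam _ H i j k hijk.
  have := @indep C N a b c ia ib ic (fun p => lam p.1 p.2.1 p.2.2) _ (i, (j, k)) hijk.
  apply => x y.
  by rewrite -(entry_sum _ _ _ lam) H mxE.
- move=> M hM.
  have [lam0 [hr hs]] := @span C N a b c ia ib ic ha hb hc M hM.
  exists (fun i j k : 'I_N.+1 => if (i + j + k <= N)%N then lam0 (i, (j, k)) else 0); split.
    by move=> i j k; case: ifP => h; [exact: hr | exact: real0].
  apply/matrixP => r s; rewrite -[r]enum_valK -[s]enum_valK entry_sum hs.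
  apply: eq_bigr => -[p1 [p2 p3]] gp /=.
  by move: gp; rewrite /good /= => ->.
Qed.
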